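(* Let $k\geq2$ and let $L=(l_1,\dots,l_k)$ be positive real numbers with $l_1+\dots+l_k=1$ such that $p_1l_1+\dots+p_kl_k\neq0$ for every $p\in\mathbb{Z}^k\setminus\{0\}$. Then every connected component $Tonn^{\infty,k}(L)$ of the full irrational tonnetz $F\text{-}Tonn^{\infty,k}(L)$ is isomorphic as a simplicial complex to the Delone triangulation $\mathcal{D}_\Lambda$ associated with the permutohedral lattice $\Lambda\cong\mathbb{A}^\ast_{k-1}$.
   Context: $C=\mathbb{R}/\mathbb{Z}$ is the circle with its group structure. A finite subset of $C$ is $L$-admissible if it is a subset of some $\Delta(x;\sigma)=\{x,\,x+l_{\sigma(1)},\,x+l_{\sigma(1)}+l_{\sigma(2)},\dots,x+l_{\sigma(1)}+\dots+l_{\sigma(k-1)}\}$ with $x\in C$, $\sigma\in S_k$. The full irrational tonnetz $F\text{-}Tonn^{\infty,k}(L)$ is the $(k-1)$-dimensional simplicial complex (vertex set $C$) of all $L$-admissible subsets; $Tonn^{\infty,k}(L)$ denotes any of its connected components. $\Lambda=\{x\in\mathbb{Z}^k:\sum x_i=0,\text{ all }x_i\text{ congruent mod }k\}$, $a_i=ke_i-(1,\dots,1)$, $a_I=\sum_{i\in I}a_i$. $\mathcal{D}_\Lambda$ is the simplicial complex with vertex set $\Lambda$ whose simplices are the sets $\{z+a_{I_1},\dots,z+a_{I_s}\}$ with $z\in\Lambda$ and $I_1\subsetneq\dots\subsetneq I_s\subsetneq[k]$. *)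

(* Defs.v *)
From Stdlib Require Import Reals ZArith List Permutation Relations.
Import ListNotations.
Open Scope R_scope.

(** * The circle C = R/Z: points are represented by reals, up to [eqC]. *)
Definition eqC (x y : R) : Prop := exists n : Z, x - y = IZR n.

(** Partial sum l_{σ(1)} + ... + l_{σ(m)} ; [l] is the list (l_1,...,l_k),
    [sigma] a list listing a permutation of the indices 0..k-1. *)
Definition psum (l : list R) (sigma : list nat) (m : nat) : R :=
  fold_right Rplus 0 (map (fun i => nth i l 0) (firstn m sigma)).

Definition inDelta (l : list R) (x : R) (sigma : list nat) (y : R) : Prop :=
  exists m : nat, (m < length l)%nat /\ eqC y (x + psum l sigma m).

Definition admissible (l : list R) (S : list R) : Prop :=
  exists (x : R) (sigma : list nat),
    Permutation (seq 0 (length l)) sigma /\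
    forall y, In y S -> inDelta l x sigma y.

Definition tedge (l : list R) (u v : R) : Prop := admissible l [u; v].
Definition in_component (l : list R) (x0 y : R) : Prop :=
  clos_refl_trans R (tedge l) x0 y.

Definition inLambda (k : nat) (x : list Z) : Prop :=
  length x = k /\ fold_right Z.add 0%Z x = 0%Z /\
  forall i j, (i < k)%nat -> (j < k)%nat ->
    Z.divide (Z.of_nat k) (nth i x 0%Z - nth j x 0%Z)%Z.

Definition vadd (x y : list Z) : list Z :=
  map (fun p => (fst p + snd p)%Z) (combine x y).

(** Subsets I of [k] as boolean lists of length k; a_I = sum_{i in I} (k e_i - 1). *)
Definition card_b (I : list bool) : Z := Z.of_nat (count_occ Bool.bool_dec I true).
Definition aI (k : nat) (I : list bool) : list Z :=
  map (fun b : bool => ((if b then Z.of_nat k else 0) - card_b I)%Z) I.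

Definition subb (I J : list bool) : Prop :=
  Forall2 (fun a b => a = true -> b = true) I J.
Definition psub (I J : list bool) : Prop := subb I J /\ I <> J.

Fixpoint chain_ok (k : nat) (c : list (list bool)) : Prop :=
  match c with
  | nil => True
  | A :: nil => length A = k /\ psub A (repeat true k)
  | A :: ((B :: _) as r) => length A = k /\ psub A B /\ chain_ok k r
  end.

Definition Dsimplex (k : nat) (T : list (list Z)) : Prop :=
  exists (z : list Z) (c : list (list bool)),
    inLambda k z /\ chain_ok k c /\
    forall v, In v T <-> exists I, In I c /\ v = vadd z (aI k I).

Definition tonnetz_component_iso_Delone (k : nat) (l : list R) (x0 : R) : Prop :=
  exists f : R -> list Z,
    (forall y y', eqC y y' -> f y = f y') /\
    (forall y, in_component l x0 y -> inLambda k (f y)) /\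
    (forall y y', in_component l x0 y -> in_component l x0 y' ->
        f y = f y' -> eqC y y') /\
    (forall z, inLambda k z -> exists y, in_component l x0 y /\ f y = z) /\
    (forall S : list R, (forall y, In y S -> in_component l x0 y) ->
        (admissible l S <-> Dsimplex k (map f S))).

(* Main.v *)
Require Import Defs.
From Stdlib Require Import Reals ZArith List Permutation Relations.
From Stdlib Require Import Lia Lra ClassicalEpsilon.
Import ListNotations.
Open Scope R_scope.

Fixpoint rsum (g : nat -> R) (n : nat) : R :=
  match n with O => 0 | S n => rsum g n + g n end.
Fixpoint zsum (g : nat -> Z) (n : nat) : Z :=
  match n with O => 0%Z | S n => (zsum g n + g n)%Z end.

Lemma rsum_ext g h n : (forall i, (i < n)%nat -> g i = h i) -> rsum g n = rsum h n.
Proof. induction n; simpl; intros H; auto. rewrite IHn by (intros; apply H; lia). rewrite H by lia; auto. Qed.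
Lemma zsum_ext g h n : (forall i, (i < n)%nat -> g i = h i) -> zsum g n = zsum h n.
Proof. induction n; simpl; intros H; auto. rewrite IHn by (intros; apply H; lia). rewrite H by lia; auto. Qed.
Lemma rsum_plus g h n : rsum (fun i => g i + h i) n = rsum g n + rsum h n.
Proof. induction n; simpl; [lra|]. rewrite IHn; lra. Qed.
Lemma rsum_scal c g n : rsum (fun i => c * g i) n = c * rsum g n.
Proof. induction n; simpl; [lra|]. rewrite IHn; lra. Qed.
Lemma rsum_zero n : rsum (fun _ => 0) n = 0.
Proof. induction n; simpl; [lra|]. rewrite IHn; lra. Qed.
Lemma zsum_plus g h n : zsum (fun i => (g i + h i)%Z) n = (zsum g n + zsum h n)%Z.
Proof. induction n; simpl; [lia|]. rewrite IHn; lia. Qed.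
Lemma zsum_const c n : zsum (fun _ => c) n = (Z.of_nat n * c)%Z.
Proof. induction n; [simpl; lia|]. cbn [zsum]. rewrite IHn, Nat2Z.inj_succ; ring. Qed.
Lemma zsum_scal c g n : zsum (fun i => (c * g i)%Z) n = (c * zsum g n)%Z.
Proof. induction n; simpl; [lia|]. rewrite IHn; ring. Qed.
Lemma rsum_delta g a n : (a < n)%nat ->
  rsum (fun i => if Nat.eq_dec i a then g i else 0) n = g a.
Proof.
  induction n; intros H; [lia|]. simpl.
  destruct (Nat.eq_dec n a).
  - subst. rewrite (rsum_ext _ (fun _ => 0)). rewrite rsum_zero; lra.
    intros i Hi; destruct (Nat.eq_dec i a); [lia|auto].
  - rewrite IHn by lia; lra.
Qed.

Lemma fold_Rplus_acc xs a : fold_right Rplus a xs = fold_right Rplus 0 xs + a.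
Proof. induction xs; simpl; [lra|]. rewrite IHxs; lra. Qed.
Lemma fold_Zplus_acc xs a : fold_right Z.add a xs = (fold_right Z.add 0 xs + a)%Z.
Proof. induction xs; simpl; [lia|]. rewrite IHxs; lia. Qed.

Lemma fold_R_seq g n : fold_right Rplus 0 (map g (seq 0 n)) = rsum g n.
Proof.
  induction n; auto. rewrite seq_S, map_app, fold_right_app. simpl.
  rewrite fold_Rplus_acc, IHn; lra.
Qed.
Lemma fold_Z_seq g n : fold_right Z.add 0%Z (map g (seq 0 n)) = zsum g n.
Proof.
  induction n; auto. rewrite seq_S, map_app, fold_right_app. simpl.
  rewrite fold_Zplus_acc, IHn; lia.
Qed.

Lemma nth_map_seq {A} (g : nat -> A) n i d : (i < n)%nat -> nth i (map g (seq 0 n)) d = g i.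
Proof.
  intros H. rewrite (nth_indep _ d (g 0%nat)) by (rewrite length_map, length_seq; lia).
  rewrite map_nth, seq_nth by lia. auto.
Qed.

Lemma list_as_map {A} (l : list A) d : l = map (fun i => nth i l d) (seq 0 (length l)).
Proof.
  apply nth_ext with d d. rewrite length_map, length_seq; auto.
  intros i Hi. rewrite nth_map_seq; auto.
Qed.

Lemma combine_map_seq {A B} (f : nat -> A) (g : nat -> B) s :
  combine (map f s) (map g s) = map (fun x => (f x, g x)) s.
Proof. induction s; simpl; auto. rewrite IHs; auto. Qed.

Definition eqCR := eqC.
Lemma eqC_refl x : eqC x x. Proof. exists 0%Z. simpl; lra. Qed.
Lemma eqC_sym x y : eqC x y -> eqC y x.
Proof. intros [n H]. exists (- n)%Z. rewrite opp_IZR; lra. Qed.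
Lemma eqC_trans x y z : eqC x y -> eqC y z -> eqC x z.
Proof. intros [n H] [m H']. exists (n + m)%Z. rewrite plus_IZR; lra. Qed.

Definition val (k : nat) (l : list R) (n : nat -> Z) : R := rsum (fun i => IZR (n i) * nth i l 0) k.
Definition phi (k : nat) (n : nat -> Z) : list Z :=
  map (fun i => (Z.of_nat k * n i - zsum n k)%Z) (seq 0 k).

Lemma sumL k l : length l = k -> fold_right Rplus 0 l = 1 -> rsum (fun i => nth i l 0) k = 1.
Proof. intros Hl Hs. rewrite (list_as_map l 0), fold_R_seq, Hl in Hs. auto. Qed.

Lemma val_ext k l n m : (forall i, (i < k)%nat -> n i = m i) -> val k l n = val k l m.
Proof. intros H; unfold val; apply rsum_ext; intros i Hi; rewrite H; auto. Qed.
Lemma val_plus k l n m : val k l (fun i => (n i + m i)%Z) = val k l n + val k l m.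
Proof. unfold val. rewrite <- rsum_plus. apply rsum_ext; intros; rewrite plus_IZR; ring. Qed.
Lemma val_opp k l n : val k l (fun i => (- n i)%Z) = - val k l n.
Proof. unfold val. replace (- rsum (fun i => IZR (n i) * nth i l 0) k) with ((-1) * rsum (fun i => IZR (n i) * nth i l 0) k) by ring.
  rewrite <- rsum_scal. apply rsum_ext; intros; rewrite opp_IZR; ring. Qed.
Lemma val_const k l d : length l = k -> fold_right Rplus 0 l = 1 -> val k l (fun _ => d) = IZR d.
Proof. intros H1 H2. unfold val. rewrite rsum_scal, (sumL k l); auto; ring. Qed.
Lemma val_zero k l : val k l (fun _ => 0%Z) = 0.
Proof. unfold val. rewrite (rsum_ext _ (fun _ => 0)), rsum_zero; auto. intros; simpl; ring. Qed.

Lemma irr_f k l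
  (Hlen : length l = k)
  (Hirr : forall p : list Z, length p = k ->
     (exists i, (i < k)%nat /\ nth i p 0%Z <> 0%Z) ->
     fold_right Rplus 0 (map (fun q => IZR (fst q) * snd q) (combine p l)) <> 0) :
  forall p, val k l p = 0 -> forall i, (i < k)%nat -> p i = 0%Z.
Proof.
  intros p Hp i Hi. destruct (Z.eq_dec (p i) 0) as [E|E]; auto. exfalso.
  apply (Hirr (map p (seq 0 k))).
  - rewrite length_map, length_seq; auto.
  - exists i; split; auto. rewrite nth_map_seq; auto.
  - assert (El : l = map (fun i => nth i l 0) (seq 0 k)) by (rewrite <- Hlen; apply list_as_map).
    rewrite El, combine_map_seq, map_map, fold_R_seq. apply Hp.
Qed.

Lemma nth_phi k n i : (i < k)%nat -> nth i (phi k n) 0%Z = (Z.of_nat k * n i - zsum n k)%Z.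
Proof. intros; unfold phi; rewrite nth_map_seq; auto. Qed.

Lemma phi_shift k n n' m : (forall i, (i < k)%nat -> n i = (n' i + m)%Z) -> phi k n = phi k n'.
Proof.
  intros H. assert (Hz : zsum n k = (zsum n' k + Z.of_nat k * m)%Z).
  { rewrite (zsum_ext _ (fun i => (n' i + m)%Z)) by auto. rewrite zsum_plus, zsum_const; auto. }
  unfold phi. apply map_ext_in. intros i Hi. apply in_seq in Hi. rewrite H, Hz by lia. ring.
Qed.

Lemma W k l
  (Hlen : length l = k) (Hsum : fold_right Rplus 0 l = 1)
  (Hirr : forall p : list Z, length p = k ->
     (exists i, (i < k)%nat /\ nth i p 0%Z <> 0%Z) ->
     fold_right Rplus 0 (map (fun q => IZR (fst q) * snd q) (combine p l)) <> 0) :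
  forall n n', eqC (val k l n) (val k l n') -> phi k n = phi k n'.
Proof.
  intros n n' [m H].
  assert (Hp : val k l (fun i => (n i + (- n' i + - m))%Z) = 0).
  { rewrite val_plus, val_plus, val_opp, (val_opp k l (fun _ => m)), val_const; auto. lra. }
  apply (phi_shift k n n' m). intros i Hi. pose proof (irr_f k l Hlen Hirr _ Hp i Hi). lia.
Qed.

Lemma phi_inj k l (Hk : (2 <= k)%nat)
  (Hlen : length l = k) (Hsum : fold_right Rplus 0 l = 1) :
  forall n n', phi k n = phi k n' -> eqC (val k l n) (val k l n').
Proof.
  intros n n' H.
  assert (Hi : forall i, (i < k)%nat -> (Z.of_nat k * n i - zsum n k = Z.of_nat k * n' i - zsum n' k)%Z).
  { intros i Hi. rewrite <- !nth_phi by auto. rewrite H; auto. }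
  set (d := (n 0%nat - n' 0%nat)%Z).
  assert (Hd : forall i, (i < k)%nat -> n i = (n' i + d)%Z).
  { intros i Hik. pose proof (Hi i Hik). pose proof (Hi 0%nat ltac:(lia)).
    assert (Z.of_nat k * (n i - n' i - d) = 0)%Z by (unfold d; lia).
    apply Z.mul_eq_0 in H2. destruct H2; lia. }
  exists d. rewrite (val_ext k l n (fun i => (n' i + d)%Z)) by auto.
  rewrite val_plus, val_const; auto. ring.
Qed.

Definition bind (s : list nat) (i : nat) : bool := if in_dec Nat.eq_dec i s then true else false.
Definition ind (s : list nat) (i : nat) : Z := if in_dec Nat.eq_dec i s then 1%Z else 0%Z.
Definition Bl (k : nat) (s : list nat) : list bool := map (bind s) (seq 0 k).

Lemma fold_nodup k l : forall s, NoDup s -> (forall x, In x s -> (x < k)%nat) ->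
  fold_right Rplus 0 (map (fun i => nth i l 0) s) = val k l (ind s).
Proof.
  induction s as [|a s IH]; intros Hn Hb.
  - simpl. rewrite (val_ext k l _ (fun _ => 0%Z)). rewrite val_zero; auto. intros; auto.
  - inversion Hn; subst. simpl. rewrite IH by (auto; intros; apply Hb; simpl; auto).
    rewrite (val_ext k l (ind (a :: s)) (fun i => (ind s i + (if Nat.eq_dec i a then 1 else 0))%Z)).
    + rewrite val_plus.
      assert (Hd : val k l (fun i => if Nat.eq_dec i a then 1%Z else 0%Z) = nth a l 0).
      { unfold val. rewrite (rsum_ext _ (fun i => if Nat.eq_dec i a then nth i l 0 else 0)).
        - apply rsum_delta. apply Hb; simpl; auto.
        - intros i _. destruct (Nat.eq_dec i a); simpl; ring. }
      rewrite Hd. lra.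
    + intros i _. unfold ind.
      destruct (Nat.eq_dec i a) as [->|ne];
      destruct (in_dec Nat.eq_dec _ s) as [A|A]; destruct (in_dec Nat.eq_dec _ (a::s)) as [B|B];
      simpl in B; try lia; try tauto.
      destruct B as [B|B]; [congruence|contradiction].
Qed.

Lemma in_firstn {A} (x : A) m s : In x (firstn m s) -> In x s.
Proof. intros H. rewrite <- (firstn_skipn m s). apply in_or_app; auto. Qed.

Lemma perm_props k (sigma : list nat) : Permutation (seq 0 k) sigma ->
  NoDup sigma /\ (forall x, In x sigma <-> (x < k)%nat) /\ length sigma = k.
Proof.
  intros P. split; [|split].
  - eapply Permutation_NoDup; eauto. apply seq_NoDup.
  - intros x; split; intros H.
    + apply Permutation_sym in P. apply (Permutation_in _ P) in H. apply in_seq in H; lia.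
    + apply (Permutation_in _ P). apply in_seq; lia.
  - rewrite <- (Permutation_length P), length_seq; auto.
Qed.

Lemma psum_val k l sigma m : Permutation (seq 0 k) sigma ->
  psum l sigma m = val k l (ind (firstn m sigma)).
Proof.
  intros P. destruct (perm_props k sigma P) as [Hn [Hi _]].
  unfold psum. apply fold_nodup.
  - rewrite <- (firstn_skipn m sigma) in Hn. eapply NoDup_app_remove_r; eauto.
  - intros x Hx. apply Hi. eapply in_firstn; eauto.
Qed.

Lemma nth_vadd x y i : length x = length y -> (i < length x)%nat ->
  nth i (vadd x y) 0%Z = (nth i x 0 + nth i y 0)%Z.
Proof.
  intros Hl Hi. unfold vadd.
  pose proof (map_nth (fun p : Z * Z => (fst p + snd p)%Z) (combine x y) (0%Z, 0%Z) i) as E.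
  simpl in E. rewrite E, combine_nth; auto.
Qed.

Lemma nth_aI k B i : (i < length B)%nat ->
  nth i (aI k B) 0%Z = ((if nth i B false then Z.of_nat k else 0) - card_b B)%Z.
Proof.
  intros Hi. unfold aI.
  rewrite (nth_indep _ 0%Z ((- card_b B)%Z)) by (rewrite length_map; lia).
  pose proof (map_nth (fun b : bool => ((if b then Z.of_nat k else 0) - card_b B)%Z) B false i) as E.
  simpl in E. rewrite E; auto.
Qed.

Lemma count_map_seq (g : nat -> bool) n :
  Z.of_nat (count_occ Bool.bool_dec (map g (seq 0 n)) true) = zsum (fun i => if g i then 1%Z else 0%Z) n.
Proof.
  induction n; auto. rewrite seq_S, map_app, count_occ_app. simpl.
  rewrite Nat2Z.inj_add, IHn. destruct (g n); simpl; lia.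
Qed.

Lemma card_Bl k s : card_b (Bl k s) = zsum (ind s) k.
Proof.
  unfold card_b, Bl. rewrite count_map_seq. apply zsum_ext. intros i _.
  unfold bind, ind. destruct (in_dec Nat.eq_dec i s); auto.
Qed.

Lemma phi_add k n s : phi k (fun i => (n i + ind s i)%Z) = vadd (phi k n) (aI k (Bl k s)).
Proof.
  assert (L1 : length (phi k n) = k) by (unfold phi; rewrite length_map, length_seq; auto).
  assert (L2 : length (aI k (Bl k s)) = k) by (unfold aI, Bl; rewrite !length_map, length_seq; auto).
  apply nth_ext with 0%Z 0%Z.
  - unfold vadd. rewrite length_map, length_combine, L1, L2. unfold phi; rewrite length_map, length_seq; lia.
  - intros i Hi. unfold phi at 1 in Hi. rewrite length_map, length_seq in Hi.
    rewrite nth_vadd by lia. rewrite !nth_phi by auto.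
    rewrite nth_aI by (unfold Bl; rewrite length_map, length_seq; auto).
    rewrite card_Bl. unfold Bl. rewrite nth_map_seq by auto. rewrite zsum_plus.
    unfold bind, ind. destruct (in_dec Nat.eq_dec i s); ring.
Qed.

Lemma edge_eq l u v : (1 <= length l)%nat -> eqC u v -> tedge l u v.
Proof.
  intros Hk H. exists u, (seq 0 (length l)). split; [apply Permutation_refl|].
  intros y Hy. exists 0%nat. split; [lia|]. unfold psum; simpl. rewrite Rplus_0_r.
  destruct Hy as [<-|[<-|[]]]; [apply eqC_refl| apply eqC_sym; auto].
Qed.

Lemma rot_perm k j : (j <= k)%nat -> Permutation (seq 0 k) (seq j (k - j) ++ seq 0 j).
Proof.
  intros H. replace k with (j + (k - j))%nat at 1 by lia. rewrite seq_app. simpl.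
  apply Permutation_app_comm.
Qed.

Lemma psum_rot1 l k j : (j < k)%nat -> psum l (seq j (k - j) ++ seq 0 j) 1 = nth j l 0.
Proof.
  intros H. unfold psum. destruct (k - j)%nat eqn:E; [lia|]. simpl. ring.
Qed.

Lemma edge_plus l k j y : length l = k -> (2 <= k)%nat -> (j < k)%nat -> tedge l y (y + nth j l 0).
Proof.
  intros Hl Hk Hj. exists y, (seq j (k - j) ++ seq 0 j). split; [rewrite Hl; apply rot_perm; lia|].
  intros z Hz. destruct Hz as [<-|[<-|[]]].
  - exists 0%nat. split; [lia|]. unfold psum; simpl. rewrite Rplus_0_r; apply eqC_refl.
  - exists 1%nat. split; [lia|]. rewrite psum_rot1 by auto. apply eqC_refl.
Qed.

Lemma edge_minus l k j y : length l = k -> (2 <= k)%nat -> (j < k)%nat -> tedge l y (y - nth j l 0).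
Proof.
  intros Hl Hk Hj. exists (y - nth j l 0), (seq j (k - j) ++ seq 0 j). split; [rewrite Hl; apply rot_perm; lia|].
  intros z Hz. destruct Hz as [<-|[<-|[]]].
  - exists 1%nat. split; [lia|]. rewrite psum_rot1 by auto. replace (y - nth j l 0 + nth j l 0) with y by ring. apply eqC_refl.
  - exists 0%nat. split; [lia|]. unfold psum; simpl. rewrite Rplus_0_r; apply eqC_refl.
Qed.

Lemma comp_zmul l k x0 j y : length l = k -> (2 <= k)%nat -> (j < k)%nat ->
  in_component l x0 y -> forall z, in_component l x0 (y + IZR z * nth j l 0).
Proof.
  intros Hl Hk Hj Hy z. induction z using Z.peano_ind.
  - simpl. rewrite Rmult_0_l, Rplus_0_r; auto.
  - eapply rt_trans; [apply IHz|]. apply rt_step.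
    replace (y + IZR (Z.succ z) * nth j l 0) with (y + IZR z * nth j l 0 + nth j l 0)
      by (rewrite succ_IZR; ring). apply (edge_plus l k); auto.
  - eapply rt_trans; [apply IHz|]. apply rt_step.
    replace (y + IZR (Z.pred z) * nth j l 0) with (y + IZR z * nth j l 0 - nth j l 0)
      by (unfold Z.pred; rewrite plus_IZR; simpl; ring). apply (edge_minus l k); auto.
Qed.

Lemma comp_char l k x0 y : length l = k -> (2 <= k)%nat ->
  in_component l x0 y <-> exists n, eqC y (x0 + val k l n).
Proof.
  intros Hl Hk. split.
  - intros H. apply clos_rt_rtn1 in H. induction H.
    + exists (fun _ => 0%Z). rewrite val_zero, Rplus_0_r. apply eqC_refl.
    + destruct IHclos_refl_trans_n1 as [n Hn].
      destruct H as [x [sigma [P Hs]]].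
      destruct (Hs y (or_introl eq_refl)) as [m1 [_ E1]].
      destruct (Hs z (or_intror (or_introl eq_refl))) as [m2 [_ E2]].
      rewrite (psum_val k) in E1, E2 by (rewrite <- Hl; exact P).
      exists (fun i => (n i + (- ind (firstn m1 sigma) i + ind (firstn m2 sigma) i))%Z).
      rewrite !val_plus, val_opp.
      destruct Hn as [a Ha]; destruct E1 as [b Hb]; destruct E2 as [c Hc].
      exists (c - b + a)%Z. rewrite plus_IZR, minus_IZR. lra.
  - intros [n Hn].
    assert (H : forall j, (j <= k)%nat -> in_component l x0 (x0 + rsum (fun i => IZR (n i) * nth i l 0) j)).
    { induction j; intros Hj.
      - simpl. rewrite Rplus_0_r. apply rt_refl.
      - simpl. rewrite <- Rplus_assoc. apply (comp_zmul l k); auto; try lia. apply IHj; lia. }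
    eapply rt_trans; [apply (H k); lia|]. apply rt_step. apply edge_eq; [lia|].
    apply eqC_sym; auto.
Qed.

Definition fmap (k : nat) (l : list R) (x0 : R) (y : R) : list Z :=
  match excluded_middle_informative (exists n, eqC y (x0 + val k l n)) with
  | left H => phi k (proj1_sig (constructive_indefinite_description _ H))
  | right _ => phi k (fun _ => 0%Z)
  end.

Lemma Fkey k l x0
  (Hlen : length l = k) (Hsum : fold_right Rplus 0 l = 1)
  (Hirr : forall p : list Z, length p = k ->
     (exists i, (i < k)%nat /\ nth i p 0%Z <> 0%Z) ->
     fold_right Rplus 0 (map (fun q => IZR (fst q) * snd q) (combine p l)) <> 0) :
  forall y n, eqC y (x0 + val k l n) -> fmap k l x0 y = phi k n.
Proof.
  intros y n Hy. unfold fmap.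
  destruct (excluded_middle_informative _) as [H|H]; [|exfalso; apply H; exists n; auto].
  destruct (constructive_indefinite_description _ H) as [n' Hn']. simpl.
  apply (W k l); auto. destruct Hn' as [a Ha]; destruct Hy as [b Hb].
  exists (b - a)%Z. rewrite minus_IZR. lra.
Qed.

Lemma fmap_eqC k l x0
  (Hlen : length l = k) (Hsum : fold_right Rplus 0 l = 1)
  (Hirr : forall p : list Z, length p = k ->
     (exists i, (i < k)%nat /\ nth i p 0%Z <> 0%Z) ->
     fold_right Rplus 0 (map (fun q => IZR (fst q) * snd q) (combine p l)) <> 0) :
  forall y y', eqC y y' -> fmap k l x0 y = fmap k l x0 y'.
Proof.
  intros y y' E.
  destruct (classic (exists n, eqC y (x0 + val k l n))) as [[n Hn]|Hno].
  - rewrite (Fkey k l x0 Hlen Hsum Hirr y n Hn).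
    rewrite (Fkey k l x0 Hlen Hsum Hirr y' n); auto.
    eapply eqC_trans; [apply eqC_sym, E| exact Hn].
  - unfold fmap. destruct (excluded_middle_informative _) as [H|H]; [contradiction|].
    destruct (excluded_middle_informative _) as [H'|H']; auto.
    exfalso. destruct H' as [n Hn]. apply Hno. exists n. eapply eqC_trans; eauto.
Qed.

Lemma phi_Lambda k n : inLambda k (phi k n).
Proof.
  split; [|split].
  - unfold phi; rewrite length_map, length_seq; auto.
  - unfold phi. rewrite fold_Z_seq.
    rewrite (zsum_ext _ (fun i => (Z.of_nat k * n i + (- zsum n k))%Z)) by (intros; ring).
    rewrite zsum_plus, zsum_scal, zsum_const. ring.
  - intros i j Hi Hj. rewrite !nth_phi by auto. exists (n i - n j)%Z. ring.
Qed.

Lemma phi_onto k (Hk : (2 <= k)%nat) z : inLambda k z -> exists n, phi k n = z.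
Proof.
  intros [Hl [Hs Hd]].
  set (K := Z.of_nat k).
  assert (HK : K <> 0%Z) by (unfold K; lia).
  exists (fun i => ((nth i z 0 - nth 0 z 0) / K)%Z).
  assert (Hm : forall i, (i < k)%nat -> (K * ((nth i z 0 - nth 0 z 0) / K) = nth i z 0 - nth 0 z 0)%Z).
  { intros i Hi. destruct (Hd i 0%nat Hi ltac:(lia)) as [q Hq]. fold K in Hq. rewrite Hq.
    rewrite Z.div_mul by auto. ring. }
  assert (Hz : zsum (fun i => ((nth i z 0 - nth 0 z 0) / K)%Z) k = (- nth 0 z 0)%Z).
  { apply (Z.mul_reg_l _ _ K); auto. rewrite <- zsum_scal.
    rewrite (zsum_ext _ (fun i => (nth i z 0 + - nth 0 z 0)%Z)) by (intros; rewrite Hm; auto; ring).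
    rewrite zsum_plus, zsum_const. rewrite (list_as_map z 0%Z), fold_Z_seq, Hl in Hs.
    rewrite Hs. unfold K. ring. }
  apply nth_ext with 0%Z 0%Z.
  - unfold phi; rewrite length_map, length_seq; auto.
  - intros i Hi. unfold phi in Hi; rewrite length_map, length_seq in Hi.
    rewrite nth_phi by auto. fold K. rewrite Hm by auto. rewrite Hz. ring.
Qed.

Lemma Forall2_map_same {A B} (R : B -> B -> Prop) (g h : A -> B) L :
  (forall x, In x L -> R (g x) (h x)) -> Forall2 R (map g L) (map h L).
Proof. induction L; simpl; intros H; constructor; auto. Qed.

Lemma length_Bl k s : length (Bl k s) = k.
Proof. unfold Bl; rewrite length_map, length_seq; auto. Qed.

Lemma nth_Bl k s i : (i < k)%nat -> nth i (Bl k s) false = bind s i.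
Proof. intros; unfold Bl; apply nth_map_seq; auto. Qed.

Lemma subb_Bl k s s' : (forall i, In i s -> In i s') -> subb (Bl k s) (Bl k s').
Proof.
  intros H. apply Forall2_map_same. intros x _. unfold bind.
  destruct (in_dec Nat.eq_dec x s); destruct (in_dec Nat.eq_dec x s'); auto.
Qed.

Lemma nodup_app_disj {A} (l1 l2 : list A) a : NoDup (l1 ++ l2) -> In a l1 -> In a l2 -> False.
Proof.
  induction l1 as [|b l1 IH]; simpl; intros H H1 H2; [auto|]. inversion H as [|b' l' Hb Hnd]; subst.
  destruct H1 as [->|H1]; [apply Hb; apply in_or_app; auto| eauto].
Qed.

Lemma psub_Bm k sigma m m' : Permutation (seq 0 k) sigma -> (m < m')%nat -> (m' <= k)%nat ->
  psub (Bl k (firstn m sigma)) (Bl k (firstn m' sigma)).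
Proof.
  intros P Hm Hm'. destruct (perm_props k sigma P) as [Hn [Hi Hl]]. split.
  - apply subb_Bl. intros i Hin.
    assert (E : firstn m sigma = firstn m (firstn m' sigma)) by (rewrite firstn_firstn; f_equal; lia).
    rewrite E in Hin. eapply in_firstn. exact Hin.
  - intros Heq. set (j := nth m sigma 0%nat).
    assert (J1 : In j (firstn m' sigma)).
    { unfold j.
      assert (nth m sigma 0%nat = nth m (firstn m' sigma) 0%nat).
      { rewrite nth_firstn. destruct (m <? m')%nat eqn:E; auto. apply Nat.ltb_ge in E; lia. }
      rewrite H. apply nth_In. rewrite length_firstn; lia. }
    assert (J2 : ~ In j (firstn m sigma)).
    { intros Hj. apply (nodup_app_disj (firstn m sigma) (skipn m sigma) j); auto.
      - rewrite firstn_skipn; auto.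
      - unfold j. replace m with (m + 0)%nat at 1 by lia. rewrite <- nth_skipn.
        apply nth_In. rewrite length_skipn; lia. }
    assert (Jk : (j < k)%nat) by (apply Hi; eapply in_firstn; eauto).
    assert (E := f_equal (fun B => nth j B false) Heq). simpl in E.
    rewrite !nth_Bl in E by auto. unfold bind in E.
    destruct (in_dec Nat.eq_dec j (firstn m sigma)); destruct (in_dec Nat.eq_dec j (firstn m' sigma));
      try congruence; contradiction.
Qed.

Lemma Bl_full k sigma : Permutation (seq 0 k) sigma -> Bl k (firstn k sigma) = repeat true k.
Proof.
  intros P. destruct (perm_props k sigma P) as [Hn [Hi Hl]].
  rewrite firstn_all2 by lia. unfold Bl.
  rewrite (map_ext_in _ (fun _ => true)). { rewrite map_const, length_seq; auto. }
  intros i Hin. apply in_seq in Hin. unfold bind.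
  destruct (in_dec Nat.eq_dec i sigma); auto. exfalso; apply n, Hi; lia.
Qed.

Lemma chain_filter k sigma (Pm : nat -> bool) : Permutation (seq 0 k) sigma ->
  forall r a, (a + r <= k)%nat ->
  chain_ok k (map (fun m => Bl k (firstn m sigma)) (filter Pm (seq a r))).
Proof.
  intros P. induction r; intros a Har; [simpl; auto|].
  simpl. destruct (Pm a); [|apply IHr; lia].
  simpl. pose proof (IHr (S a) ltac:(lia)) as IH.
  assert (Hb : forall b, In b (filter Pm (seq (S a) r)) -> (a < b /\ b < k)%nat).
  { intros b Hb. apply filter_In in Hb. destruct Hb as [Hb _]. apply in_seq in Hb. lia. }
  destruct (filter Pm (seq (S a) r)) as [|b ms] eqn:E.
  - split; [apply length_Bl|]. rewrite <- (Bl_full k sigma P). apply psub_Bm; auto; lia.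
  - simpl in IH |- *. split; [apply length_Bl|]. split; auto.
    destruct (Hb b (or_introl eq_refl)). apply psub_Bm; auto; lia.
Qed.

Fixpoint build (k : nat) (bot : list bool) (c : list (list bool)) : list nat :=
  match c with
  | [] => []
  | A :: r => filter (fun i => andb (nth i A false) (negb (nth i bot false))) (seq 0 k) ++ build k A r
  end.

Fixpoint wchain (k : nat) (bot : list bool) (c : list (list bool)) : Prop :=
  match c with
  | [] => True
  | A :: r => (forall i, (i < k)%nat -> nth i bot false = true -> nth i A false = true) /\ wchain k A r
  end.

Lemma build_in k : forall c bot, wchain k bot c -> forall i, In i (build k bot c) ->
  (i < k)%nat /\ nth i bot false = false.
Proof.
  induction c as [|A r IH]; intros bot Hw i Hi; simpl in *; [contradiction|]. destruct Hw as [Hs Hw].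
  apply in_app_or in Hi. destruct Hi as [Hi|Hi].
  - apply filter_In in Hi. destruct Hi as [Hi Hb]. apply in_seq in Hi.
    apply andb_prop in Hb. destruct Hb as [_ Hb]. split; [lia|]. destruct (nth i bot false); auto.
  - destruct (IH A Hw i Hi) as [Hk HA]. split; auto.
    destruct (nth i bot false) eqn:E; auto. rewrite (Hs i Hk E) in HA. discriminate.
Qed.

Lemma build_nodup k : forall c bot, wchain k bot c -> NoDup (build k bot c).
Proof.
  induction c as [|A r IH]; simpl; intros bot Hw; [constructor|].
  destruct Hw as [Hs Hw]. apply NoDup_app.
  - apply NoDup_filter, seq_NoDup.
  - apply IH; auto.
  - intros a Ha Hb. apply filter_In in Ha. destruct Ha as [_ Ha]. apply andb_prop in Ha.
    destruct Ha as [Ha _]. destruct (build_in k r A Hw a Hb) as [_ E]. congruence.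
Qed.

Lemma build_pref k : forall c bot, wchain k bot c -> forall A, In A c -> exists m,
  forall i, (i < k)%nat -> (nth i A false = true <-> nth i bot false = true \/ In i (firstn m (build k bot c))).
Proof.
  induction c as [|A0 r IH]; intros bot Hw A HA; simpl in *; [contradiction|]. destruct Hw as [Hs Hw].
  set (p := filter (fun i => andb (nth i A0 false) (negb (nth i bot false))) (seq 0 k)).
  assert (Hp : forall i, (i < k)%nat -> (In i p <-> nth i A0 false = true /\ nth i bot false = false)).
  { intros i Hi. unfold p. rewrite filter_In, in_seq. split.
    - intros [_ H]. apply andb_prop in H. destruct H as [H1 H2]. split; auto.
      destruct (nth i bot false); auto.
    - intros [H1 H2]. split; [lia|]. rewrite H1, H2; auto. }
  destruct HA as [<-|HA].
  - exists (length p). intros i Hi. replace (length p) with (length p + 0)%nat by lia.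
    rewrite firstn_app_2. simpl. rewrite app_nil_r. rewrite Hp by auto.
    specialize (Hs i Hi). destruct (nth i A0 false); destruct (nth i bot false); intuition.
  - destruct (IH A0 Hw A HA) as [m' Hm']. exists (length p + m')%nat. intros i Hi.
    rewrite firstn_app_2. rewrite Hm' by auto. rewrite in_app_iff, Hp by auto.
    specialize (Hs i Hi). destruct (nth i A0 false); destruct (nth i bot false); intuition.
Qed.

Lemma subb_nth A B : subb A B -> forall i, nth i A false = true -> nth i B false = true.
Proof.
  induction 1; intros i Hi; [destruct i; discriminate|].
  destruct i; simpl in *; auto.
Qed.

Lemma chain_w k : forall c, chain_ok k c -> forall bot,
  (forall A, hd_error c = Some A -> forall i, (i < k)%nat -> nth i bot false = true -> nth i A false = true) ->
  wchain k bot (c ++ [repeat true k]).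
Proof.
  assert (Hfull : forall i, (i < k)%nat -> nth i (repeat true k) false = true).
  { intros i Hi. rewrite (nth_indep _ false true) by (rewrite repeat_length; auto). apply nth_repeat. }
  induction c as [|A r IH]; intros Hc bot Hb.
  - simpl. split; auto.
  - simpl. split; [apply Hb; auto|].
    destruct r as [|B r'].
    + simpl. split; auto.
    + destruct Hc as [_ [[Hs _] Hc]]. apply IH; auto.
      intros A' E i Hi HA. simpl in E. inversion E; subst. eapply subb_nth; eauto.
Qed.

Lemma chain_elem k : forall c, chain_ok k c -> forall A, In A c ->
  length A = k /\ exists i, (i < k)%nat /\ nth i A false = false.
Proof.
  induction c as [|A r IH]; intros Hc A' HA; [contradiction|].
  destruct r as [|B r'].
  - destruct HA as [<-|[]]. destruct Hc as [Hl [_ Hne]]. split; auto.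
    destruct (classic (exists i, (i < k)%nat /\ nth i A false = false)) as [H|H]; auto.
    exfalso. apply Hne. apply nth_ext with false false.
    + rewrite repeat_length; auto.
    + intros n Hn. rewrite (nth_indep (repeat true k) false true) by (rewrite repeat_length; lia).
      rewrite nth_repeat. destruct (nth n A false) eqn:E; auto. exfalso; apply H; exists n; split; auto; lia.
  - destruct Hc as [Hl [[Hs _] Hc]]. destruct HA as [<-|HA]; [|apply IH; auto].
    split; auto. destruct (IH Hc B (or_introl eq_refl)) as [_ [i [Hi HB]]].
    exists i; split; auto. destruct (nth i A false) eqn:E; auto.
    rewrite (subb_nth _ _ Hs i E) in HB; discriminate.
Qed.

Lemma chain_perm k c : chain_ok k c -> exists sigma, Permutation (seq 0 k) sigma /\
  forall I, In I c -> exists m, (m < k)%nat /\ I = Bl k (firstn m sigma).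
Proof.
  intros Hc.
  assert (Hw : wchain k (repeat false k) (c ++ [repeat true k])).
  { apply chain_w; auto. intros A _ i _ H. rewrite nth_repeat in H; discriminate. }
  set (sigma := build k (repeat false k) (c ++ [repeat true k])).
  assert (Hbot : forall i, nth i (repeat false k) false = false) by (intros; apply nth_repeat).
  assert (Hs : forall x, In x (seq 0 k) <-> In x sigma).
  { intros x. rewrite in_seq. split.
    - intros Hx. destruct (build_pref k _ _ Hw (repeat true k)) as [m Hm].
      { apply in_or_app; simpl; auto. }
      destruct (proj1 (Hm x ltac:(lia))) as [H|H].
      + rewrite (nth_indep _ false true) by (rewrite repeat_length; lia). apply nth_repeat.
      + rewrite Hbot in H; discriminate.
      + eapply in_firstn; eauto.
    - intros Hx. destruct (build_in k _ _ Hw x Hx). lia. }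
  assert (P : Permutation (seq 0 k) sigma).
  { apply NoDup_Permutation; auto. apply seq_NoDup. apply build_nodup; auto. }
  exists sigma. split; auto.
  intros I HI. destruct (build_pref k _ _ Hw I) as [m Hm]; [apply in_or_app; auto|].
  fold sigma in Hm. destruct (chain_elem k c Hc I HI) as [HIl [j [Hj HIj]]].
  destruct (perm_props k sigma P) as [_ [Hi Hl]].
  assert (Hmk : (m < k)%nat).
  { destruct (Nat.lt_ge_cases m k) as [H|H]; auto. exfalso.
    rewrite firstn_all2 in Hm by lia. assert (nth j I false = true) by (apply Hm; auto; right; apply Hi; auto). congruence. }
  exists m. split; auto. apply nth_ext with false false.
  - rewrite length_Bl; auto.
  - intros i Hik. rewrite HIl in Hik. rewrite nth_Bl by auto. unfold bind.
    destruct (in_dec Nat.eq_dec i (firstn m sigma)) as [Hin|Hin].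
    + apply Hm; auto.
    + destruct (nth i I false) eqn:E; auto. exfalso. apply Hm in E; auto.
      rewrite Hbot in E. destruct E; [discriminate|contradiction].
Qed.

Theorem theorem6p5 (k : nat) (l : list R)
  (Hk : (2 <= k)%nat)
  (Hlen : length l = k)
  (Hpos : forall i, (i < k)%nat -> 0 < nth i l 0)
  (Hsum : fold_right Rplus 0 l = 1)
  (Hirr : forall p : list Z, length p = k ->
     (exists i, (i < k)%nat /\ nth i p 0%Z <> 0%Z) ->
     fold_right Rplus 0 (map (fun q => IZR (fst q) * snd q) (combine p l)) <> 0) :
  forall x0 : R, tonnetz_component_iso_Delone k l x0.
Proof.
  intros x0.
  pose proof (Fkey k l x0 Hlen Hsum Hirr) as FK.
  pose proof (fmap_eqC k l x0 Hlen Hsum Hirr) as FE.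
  pose proof (fun y => comp_char l k x0 y Hlen Hk) as CC.
  assert (KK : forall x n sigma m, eqC x (x0 + val k l n) -> Permutation (seq 0 k) sigma ->
     eqC (x + psum l sigma m) (x0 + val k l (fun i => (n i + ind (firstn m sigma) i)%Z)) /\
     fmap k l x0 (x + psum l sigma m) = vadd (fmap k l x0 x) (aI k (Bl k (firstn m sigma)))).
  { intros x n sigma m Hx P.
    assert (E : eqC (x + psum l sigma m) (x0 + val k l (fun i => (n i + ind (firstn m sigma) i)%Z))).
    { rewrite val_plus, (psum_val k) by auto. destruct Hx as [a Ha]. exists a. lra. }
    split; auto. rewrite (FK _ _ E), (FK _ _ Hx). apply phi_add. }
  assert (INJ : forall y y', in_component l x0 y -> in_component l x0 y' ->
     fmap k l x0 y = fmap k l x0 y' -> eqC y y').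
  { intros y y' Hy Hy' E. apply CC in Hy, Hy'. destruct Hy as [n Hn]; destruct Hy' as [n' Hn'].
    rewrite (FK _ _ Hn), (FK _ _ Hn') in E. apply (phi_inj k l Hk Hlen Hsum) in E.
    destruct Hn as [a Ha]; destruct Hn' as [b Hb]; destruct E as [c Hc].
    exists (a + c - b)%Z. rewrite minus_IZR, plus_IZR. lra. }
  exists (fmap k l x0). split; [|split; [|split; [|split]]].
  - exact FE.
  - intros y Hy. apply CC in Hy. destruct Hy as [n Hn]. rewrite (FK _ _ Hn). apply phi_Lambda.
  - exact INJ.
  - intros z Hz. destruct (phi_onto k Hk z Hz) as [n Hn]. exists (x0 + val k l n). split.
    + apply CC. exists n. apply eqC_refl.
    + rewrite (FK _ n); auto. apply eqC_refl.
  - intros S HS. split.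
    +
      intros [x [sigma [P HD]]]. rewrite Hlen in P.
      destruct S as [|y0 S'].
      * exists (phi k (fun _ => 0%Z)), []. split; [apply phi_Lambda|]. split; [simpl; auto|].
        intros v; simpl; split; [intros []|intros [I [[] _]]].
      * destruct (HD y0 (or_introl eq_refl)) as [m0 [_ Hm0]].
        destruct (proj1 (CC y0) (HS y0 (or_introl eq_refl))) as [n0 Hn0].
        set (n := fun i => (n0 i + - ind (firstn m0 sigma) i)%Z).
        assert (Hx : eqC x (x0 + val k l n)).
        { unfold n. rewrite val_plus, val_opp, <- (psum_val k) by auto.
          destruct Hm0 as [a Ha]; destruct Hn0 as [b Hb]. exists (b - a)%Z. rewrite minus_IZR. lra. }
        set (S := y0 :: S') in *.
        set (Pm := fun m => if excluded_middle_informative (exists y, In y S /\ eqC y (x + psum l sigma m))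
                            then true else false).
        exists (fmap k l x0 x), (map (fun m => Bl k (firstn m sigma)) (filter Pm (seq 0 k))).
        split; [rewrite (FK _ _ Hx); apply phi_Lambda|]. split.
        { apply chain_filter; auto. }
        intros v. split.
        -- intros Hv. apply in_map_iff in Hv. destruct Hv as [y [<- Hy]].
           destruct (HD y Hy) as [m [Hm Hym]]. rewrite Hlen in Hm.
           exists (Bl k (firstn m sigma)). split.
           ++ apply (in_map (fun m => Bl k (firstn m sigma))). apply filter_In. split; [apply in_seq; lia|].
              unfold Pm. destruct (excluded_middle_informative _) as [_|H]; auto.
              exfalso; apply H; exists y; auto.
           ++ rewrite (FE _ _ Hym). apply (KK x n sigma m Hx P).
        -- intros [I [HI ->]]. apply in_map_iff in HI. destruct HI as [m [<- Hm]].
           apply filter_In in Hm. destruct Hm as [Hm HP]. unfold Pm in HP.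
           destruct (excluded_middle_informative _) as [[y [Hy E]]|_]; [|discriminate].
           apply in_map_iff. exists y. split; auto.
           rewrite (FE _ _ E). apply (KK x n sigma m Hx P).
    +
      intros [z [c [Hz [Hc Hv]]]].
      destruct (phi_onto k Hk z Hz) as [n Hn].
      destruct (chain_perm k c Hc) as [sigma [P Hsig]].
      exists (x0 + val k l n), sigma. split; [rewrite Hlen; auto|].
      intros y Hy.
      assert (Hfy : In (fmap k l x0 y) (map (fmap k l x0) S)) by (apply in_map; auto).
      apply Hv in Hfy. destruct Hfy as [I [HI Efy]].
      destruct (Hsig I HI) as [m [Hm ->]].
      exists m. split; [lia|].
      destruct (KK (x0 + val k l n) n sigma m (eqC_refl _) P) as [E1 E2].
      apply INJ; auto.
      * apply CC. eexists; exact E1.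
      * rewrite E2, Efy. rewrite (FK _ n (eqC_refl _)), Hn. auto.
Qed.
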